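(* Let $f\in\mathbb{Q}[x]$ be a convex univariate polynomial of degree $4$. If the minimum value of $f$ over $\mathbb{R}$ is rational, then the minimizer of $f$ is rational. *)

(* Defs.v *)
From HB Require Import structures.
From mathcomp Require Import all_boot all_order all_algebra.
From mathcomp Require Export reals.
Set Implicit Arguments. Unset Strict Implicit. Unset Printing Implicit Defensive.
Import Order.TTheory GRing.Theory Num.Theory.
Local Open Scope ring_scope.

Definition convex_on_R (R : realType) (g : R -> R) : Prop :=
  forall (x y t : R), 0 <= t -> t <= 1 ->
    g (t * x + (1 - t) * y) <= t * g x + (1 - t) * g y.

(* Main.v *)
Require Import Defs.
From HB Require Import structures.
From mathcomp Require Import all_boot all_order all_algebra.
From mathcomp Require Import reals.
From mathcomp Require Import boolp classical_sets topology normedtype derive.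
From mathcomp Require Import ring lra.
Import Order.TTheory GRing.Theory Num.Theory.
Import numFieldNormedType.Exports.
Local Open Scope ring_scope.

Lemma lin_root (R : realType) (P : {poly rat}) (x : R) :
  size P = 2%N -> (map_poly ratr P).[x] = 0 -> x = ratr (- P`_0 / P`_1).
Proof.
move=> sP.
have -> : (map_poly (ratr : rat -> R) P).[x] = ratr (P`_0) + ratr (P`_1) * x.
  rewrite horner_coef size_map_poly sP big_ord_recl big_ord1 !coef_map /=.
  by rewrite expr0 expr1 mulr1.
have P1 : P`_1 != 0.
  have : lead_coef P != 0 by rewrite lead_coef_eq0 -size_poly_eq0 sP.
  by rewrite lead_coefE sP.
have P1r : (ratr (P`_1) : R) != 0 by rewrite fmorph_eq0.
move=> h; rewrite fmorph_div rmorphN /=.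
apply: (mulfI P1r); rewrite [RHS]mulrCA mulfV // mulr1.
by apply/eqP; rewrite -addr_eq0 addrC h.
Qed.

Lemma uniq_min (R : realType) (F : {poly R}) (t s : R) :
  size F = 5%N ->
  (forall x y l : R, 0 <= l -> l <= 1 ->
     F.[l * x + (1 - l) * y] <= l * F.[x] + (1 - l) * F.[y]) ->
  (forall x, F.[t] <= F.[x]) -> F.[s] = F.[t] -> s = t.
Proof.
move=> sF cvx tmin Fs; apply/eqP; apply/negPn/negP => st.
pose G := F - (F.[t])%:P.
have sG : size G = 5%N.
  rewrite /G size_polyDl ?size_polyN sF // size_polyC; by case: (_ != 0).
have G0 : G != 0 by rewrite -size_poly_eq0 sG.
pose pt (i : nat) := (i%:R / 4) * s + (1 - i%:R / 4) * t.
have := max_poly_roots G0 (rs := map pt (iota 0 5)).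
rewrite size_map size_iota sG ltnn => H; suff: false by []; apply: H.
  apply/allP => x /mapP [i]; rewrite mem_iota add0n => /andP [_ i5] ->.
  rewrite /root /G hornerD hornerN hornerC subr_eq0; apply/eqP/le_anti.
  rewrite tmin andbT.
  have l0 : 0 <= (i%:R / 4 : R) by rewrite divr_ge0 ?ler0n.
  have l1 : (i%:R / 4 : R) <= 1.
    rewrite ler_pdivrMr ?ltr0n // mul1r ler_nat.
    by rewrite -ltnS.
  apply: (le_trans (cvx _ _ _ l0 l1)); rewrite Fs -mulrDl addrCA subrr addr0 mul1r.
  done.
rewrite map_inj_uniq ?iota_uniq // => i j.
rewrite /pt => /eqP; rewrite -subr_eq0 => /eqP h.
have : (i%:R / 4 - j%:R / 4) * (s - t) = 0 :> R.
  by rewrite -h; ring.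
move/eqP; rewrite mulf_eq0 [s - t == 0]subr_eq0 (negPf st) orbF subr_eq0 => /eqP.
move=> /(congr1 (fun z => z * 4)); rewrite !divfK ?pnatr_eq0 //.
by move/eqP; rewrite eqr_nat => /eqP.
Qed.

Lemma lin_horner (K : fieldType) (P : {poly K}) x :
  size P = 2%N -> P.[x] = P`_0 + P`_1 * x.
Proof.
move=> sP; rewrite horner_coef sP big_ord_recl big_ord1 /=.
by rewrite expr0 expr1 mulr1.
Qed.

Lemma lin_c1 (K : fieldType) (P : {poly K}) : size P = 2%N -> P`_1 != 0.
Proof.
move=> sP; have : lead_coef P != 0 by rewrite lead_coef_eq0 -size_poly_eq0 sP.
by rewrite lead_coefE sP.
Qed.

Lemma lin_root_val (K : fieldType) (P : {poly K}) :
  size P = 2%N -> P.[- P`_0 / P`_1] = 0.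
Proof.
move=> sP; rewrite lin_horner // mulrCA mulfV; [by rewrite mulr1 subrr | exact: lin_c1].
Qed.

Theorem lemmaC3 (R : realType) (f : {poly rat}) :
  size f = 5%N ->
  convex_on_R (fun x : R => (map_poly ratr f).[x]) ->
  (exists q : rat,
      (forall x : R, ratr q <= (map_poly ratr f).[x]) /\
      (exists x0 : R, (map_poly ratr f).[x0] = ratr q)) ->
  forall xmin : R, (forall x : R, (map_poly ratr f).[xmin] <= (map_poly ratr f).[x]) ->
  exists r : rat, xmin = ratr r.
Proof.
move=> sf cvx [q [qle [x0 Fx0]]] t tmin.
set F := map_poly ratr f in cvx qle Fx0 tmin *.
have Ft : F.[t] = ratr q by apply/le_anti; rewrite qle -Fx0 tmin.
pose g := f - q%:P.
have Gm : map_poly (ratr : rat -> R) g = F - (ratr q)%:P.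
  by rewrite rmorphB /= map_polyC.
have Gx x : (map_poly (ratr : rat -> R) g).[x] = F.[x] - F.[t].
  by rewrite Gm hornerD hornerN hornerC Ft.
have sg : size g = 5%N.
  rewrite /g size_polyDl ?size_polyN sf // size_polyC; by case: (_ != 0).
have g0 : g != 0 by rewrite -size_poly_eq0 sg.
have sF : size F = 5%N by rewrite size_map_poly.
have uniqG s : (map_poly (ratr : rat -> R) g).[s] = 0 -> s = t.
  by rewrite Gx => /eqP; rewrite subr_eq0 => /eqP; apply: uniq_min.
have dG : (map_poly (ratr : rat -> R) g)^`().[t] = 0.
  have H : is_derive t (1 : R) (horner F) (0 : R).
    apply: (@derive1_at_min _ _ (t - 1) (t + 1)).
    - by rewrite lerD2l; apply: (le_trans (lerN10 _)).
    - by move=> *; exact: derivable_horner.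
    - by rewrite in_itv /= ltrDl ltr01 gtrDl ltrN10.
    - by move=> *; apply: tmin.
  rewrite Gm derivB derivC subr0.
  by rewrite -(@derive_val _ _ _ _ _ _ _ (is_derive_poly F t)) (@derive_val _ _ _ _ _ _ _ H).
pose D := gcdp g g^`().
have Dmap : map_poly (ratr : rat -> R) D =
    gcdp (map_poly ratr g) (map_poly (ratr : rat -> R) g)^`().
  by rewrite gcdp_map deriv_map.
have rootD : root (map_poly (ratr : rat -> R) D) t.
  by rewrite Dmap root_gcd /root dG Gx subrr eqxx.
have rootsD s : root (map_poly (ratr : rat -> R) D) s -> s = t.
  by rewrite Dmap root_gcd => /andP [/eqP /uniqG].
have D0 : D != 0 by rewrite gcdp_eq0 negb_and g0.
have g'0 : g^`() != 0.
  apply/eqP => /(congr1 (fun p : {poly rat} => p`_3)).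
  rewrite coef_deriv coef0 => /eqP; rewrite mulrn_eq0 /=.
  have : lead_coef g != 0 by rewrite lead_coef_eq0.
  by rewrite lead_coefE sg => /negPf ->.
have sD4 : (size D <= 4)%N.
  apply: (leq_trans (leq_gcdpr _ g'0)).
  by have := lt_size_deriv g0; rewrite sg.
have sD1 : (1 < size D)%N.
  by rewrite -(size_map_poly (ratr : {rmorphism rat -> R})); apply: root_size_gt1 rootD; rewrite map_poly_eq0.
have [sD2|sD3|sD4'] : [\/ size D = 2%N, size D = 3%N | size D = 4%N].
- move: sD1 sD4; case: (size D) => [|[|[|[|[|n]]]]] //= _ _.
  + by constructor 1.
  + by constructor 2.
  + by constructor 3.
- exists (- D`_0 / D`_1); apply: lin_root => //; exact/eqP.
- pose Dr := map_poly (ratr : rat -> R) D.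
  have sDr : size Dr = 3%N by rewrite size_map_poly.
  have Dr0 : Dr != 0 by rewrite -size_poly_eq0 sDr.
  pose L := Dr %/ ('X - t%:P).
  have DrE : Dr = L * ('X - t%:P) by rewrite divpK // -root_factor_theorem.
  have L0 : L != 0 by apply: contraNneq Dr0; rewrite DrE => ->; rewrite mul0r.
  have sL : size L = 2%N.
    by move: sDr; rewrite DrE size_mul ?polyXsubC_eq0 // size_XsubC addn2 /= => [[]].
  have yt : - L`_0 / L`_1 = t.
    apply: rootsD; rewrite -/Dr DrE /root hornerM lin_root_val // mul0r //.
  have Lt : L`_0 + L`_1 * t = 0 by rewrite -yt -lin_horner // lin_root_val.
  have Dx x : Dr.[x] = (L`_0 + L`_1 * x) * (x - t).
    by rewrite DrE hornerM lin_horner // hornerXsubC.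
  have Dq x : Dr.[x] = ratr D`_0 + ratr D`_1 * x + ratr D`_2 * x ^+ 2.
    rewrite horner_coef sDr !big_ord_recl big_ord0 /= !coef_map /=.
    by rewrite expr0 expr1 mulr1 addr0 addrA.
  have d2 : D`_2 != 0.
    have : lead_coef D != 0 by rewrite lead_coef_eq0.
    by rewrite lead_coefE sD3.
  have d2r : (ratr D`_2 : R) != 0 by rewrite fmorph_eq0.
  have e0 := Dx 0; rewrite Dq in e0.
  have e1 := Dx 1; rewrite Dq in e1.
  have e2 := Dx (-1); rewrite Dq in e2.
  have L0t : L`_0 = - (L`_1 * t) by apply/eqP; rewrite -addr_eq0 Lt.
  rewrite L0t in e0 e1 e2.
  have h2 : ratr D`_2 = L`_1 :> R by nra.
  have h1 : ratr D`_1 = - 2 * L`_1 * t :> R by nra.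
  exists (- D`_1 / (2 * D`_2)).
  rewrite fmorph_div rmorphN rmorphM /= h1 h2 rmorph_nat.
  move: d2r; rewrite h2 => l1. field; by rewrite l1.
- pose E := g %/ D.
  have gE : g = E * D by rewrite divpK // dvdp_gcdl.
  have E0 : E != 0 by apply: contraNneq g0; rewrite gE => ->; rewrite mul0r.
  have sE : size E = 2%N.
    by move: sg; rewrite gE size_mul // sD4' addn4 /= => [[]].
  exists (- E`_0 / E`_1); symmetry; apply: uniqG.
  by rewrite horner_map gE hornerM lin_root_val // mul0r rmorph0.
Qed.
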